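(* Let $\mathcal{S}\subseteq\mathbb{Q}[x_1,\dots,x_n]$ and let $m\ge1$ be an integer. Set $\mathcal{S}^m=\{P(x_1^m,\dots,x_n^m)\ :\ P\in\mathcal{S}\}$, and for a set $\mathcal{T}$ of polynomials write $\mathcal{T}^m$ likewise. Let $G(I)$ denote the unique reduced monic Gröbner basis of an ideal $I$ with respect to the lexicographic monomial order ($x^\nu>x^\mu$ iff the first non-zero entry of $\nu-\mu$ is positive). Then $$G(\langle\mathcal{S}^m\rangle)=G(\langle\mathcal{S}\rangle)^m,$$ where $\langle\cdot\rangle$ denotes the ideal generated. *)

(* Defs.v *)
From HB Require Import structures.
From mathcomp Require Import all_boot all_order all_algebra.
From mathcomp Require Import mpoly.
Set Implicit Arguments. Unset Strict Implicit. Unset Printing Implicit Defensive.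
Import Order.TTheory GRing.Theory Num.Theory.
Local Open Scope ring_scope.

Section GB.
Variable n : nat.
Local Notation P := {mpoly rat[n]}.
Local Notation M := 'X_{1..n}.

Definition lex_lt (a b : M) : bool :=
  [exists i : 'I_n, [forall j : 'I_n, (j < i)%N ==> (a j == b j)] && (a i < b i)%N].

Definition mdiv (a b : M) : bool := [forall i : 'I_n, (a i <= b i)%N].

Definition is_lm (p : P) (a : M) : Prop :=
  a \in msupp p /\ forall b, b \in msupp p -> b != a -> lex_lt b a.

Definition ideal_gen (S : P -> Prop) : P -> Prop :=
  fun p => exists s : seq (P * P),
    (forall x, x \in s -> S x.2) /\ p = \sum_(x <- s) x.1 * x.2.

Definition is_groebner (I : P -> Prop) (G : seq P) : Prop :=
  (forall g, g \in G -> I g) /\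
  (forall f, I f -> f != 0 -> forall a, is_lm f a ->
     exists2 g, g \in G & exists2 b, is_lm g b & mdiv b a).

Definition is_reduced_groebner (I : P -> Prop) (G : seq P) : Prop :=
  is_groebner I G /\
  (forall g, g \in G -> exists2 a, is_lm g a & g@_a = 1) /\
  (forall g g', g \in G -> g' \in G -> g != g' ->
     forall a, is_lm g' a -> forall b, b \in msupp g -> ~~ mdiv a b).

Definition powm (m : nat) (p : P) : P :=
  comp_mpoly [tuple ('X_i : P) ^+ m | i < n] p.

Definition set_powm (m : nat) (S : P -> Prop) : P -> Prop :=
  fun q => exists2 p, S p & q = powm m p.

End GB.

(* Main.v *)
Require Import Defs.
From HB Require Import structures.
From mathcomp Require Import all_boot all_order all_algebra.
From mathcomp Require Import mpoly.
From mathcomp Require Import ssrcomplements.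
From mathcomp Require Import zify.
Set Implicit Arguments. Unset Strict Implicit. Unset Printing Implicit Defensive.
Import Order.TTheory GRing.Theory Num.Theory.
Local Open Scope ring_scope.
Section Lex.
Variable n : nat.
Implicit Types a b c : 'X_{1..n}.

Lemma lex_ltP a b : reflect (exists i : 'I_n,
   (forall j : 'I_n, (j < i)%N -> a j = b j) /\ (a i < b i)%N) (lex_lt a b).
Proof.
apply: (iffP existsP) => [[i /andP[/forallP H1 H2]]|[i [H1 H2]]].
  exists i; split => // j hj; exact/eqP/(implyP (H1 j)).
exists i; rewrite H2 andbT; apply/forallP => j; apply/implyP => hj.
by rewrite H1.
Qed.

Lemma lex_irr a : ~~ lex_lt a a.
Proof. by apply/lex_ltP => -[i [_]]; rewrite ltnn. Qed.

Lemma lex_trans a b c : lex_lt a b -> lex_lt b c -> lex_lt a c.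
Proof.
move=> /lex_ltP [i [Hi1 Hi2]] /lex_ltP [j [Hj1 Hj2]]; apply/lex_ltP.
have [ltij|leji] := ltnP i j.
  exists i; split => [k hk|]; first by rewrite Hi1 // Hj1 //; lia.
  by rewrite -(Hj1 i ltij).
exists j; split => [k hk|]; first by rewrite Hi1 ?Hj1 //; lia.
have : (a j <= b j)%N.
  by case: (ltngtP j i) leji => // [h _|h _]; [rewrite Hi1|rewrite (val_inj h) ltnW].
lia.
Qed.

Lemma lex_total a b : a != b -> lex_lt a b || lex_lt b a.
Proof.
move=> ab.
have [i0 Hi0] : exists i : 'I_n, a i != b i.
  apply/existsP; apply: contraR ab => /existsPn H; apply/eqP/mnmP => i.
  by apply/eqP; move: (H i); rewrite negbK.
case: (@arg_minnP _ i0 (fun i : 'I_n => a i != b i) (fun i => nat_of_ord i) Hi0) => k Hk Hmin.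
have Heq : forall j : 'I_n, (j < k)%N -> a j = b j.
  move=> j hj; apply/eqP; apply: contraTT hj => /Hmin; rewrite -leqNgt //.
case: (ltngtP (a k) (b k)) Hk => // h _.
  by apply/orP; left; apply/lex_ltP; exists k.
by apply/orP; right; apply/lex_ltP; exists k; split => // j hj; rewrite Heq.
Qed.

Lemma lex_map a b a' b' :
  (forall i, (a' i == b' i) = (a i == b i)) ->
  (forall i, (a' i < b' i)%N = (a i < b i)%N) ->
  lex_lt a' b' = lex_lt a b.
Proof.
move=> He Hl; apply/lex_ltP/lex_ltP => -[i [H1 H2]]; exists i; split.
- by move=> j hj; apply/eqP; rewrite -He; apply/eqP/H1.
- by rewrite -Hl.
- by move=> j hj; apply/eqP; rewrite He; apply/eqP/H1.
- by rewrite Hl.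
Qed.

Lemma mdivP a b : reflect (forall i, (a i <= b i)%N) (mdiv a b).
Proof. exact: (iffP forallP). Qed.

Lemma mdiv_trans a b c : mdiv a b -> mdiv b c -> mdiv a c.
Proof. move=> /mdivP H1 /mdivP H2; apply/mdivP => i; exact: leq_trans (H1 i) (H2 i). Qed.

Lemma mdiv_anti a b : mdiv a b -> mdiv b a -> a = b.
Proof.
move=> /mdivP H1 /mdivP H2; apply/mnmP => i; apply/eqP; rewrite eqn_leq H1 H2 //.
Qed.

Lemma mdiv_nlex a b : mdiv b a -> ~~ lex_lt a b.
Proof.
move=> /mdivP H; apply/lex_ltP => -[i [_ h]]; move: (H i); lia.
Qed.

Lemma lm_uniq (p : {mpoly rat[n]}) a b : is_lm p a -> is_lm p b -> a = b.
Proof.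
move=> [ha Ha] [hb Hb]; apply/eqP; apply/negP => /negP ab.
have ba : b != a by rewrite eq_sym.
have := lex_trans (Ha b hb ba) (Hb a ha ab).
by rewrite (negbTE (lex_irr _)).
Qed.

Lemma exists_max (s : seq 'X_{1..n}) : s != [::] ->
  exists2 a, a \in s & forall b, b \in s -> b != a -> lex_lt b a.
Proof.
elim: s => // x s IH _.
case: (eqVneq s [::]) => [->|sne].
  by exists x; rewrite ?mem_seq1 // => b; rewrite mem_seq1 => ->.
case: (IH sne) => a ha Ha.
case: (eqVneq x a) => [xa|xa].
  exists a; first by rewrite in_cons ha orbT.
  by move=> b; rewrite in_cons => /orP[/eqP->|]; [rewrite xa eqxx|exact: Ha].
case/orP: (lex_total xa) => h.
  exists a; first by rewrite in_cons ha orbT.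
  by move=> b; rewrite in_cons => /orP[/eqP->|]; [|exact: Ha].
exists x; first by rewrite mem_head.
move=> b; rewrite in_cons => /orP[/eqP->|hb]; first by rewrite eqxx.
move=> bx; case: (eqVneq b a) => [->//|ba]; exact: lex_trans (Ha b hb ba) h.
Qed.

Lemma exists_lm (p : {mpoly rat[n]}) : p != 0 -> exists a, is_lm p a.
Proof.
move=> p0; have : msupp p != [::] by rewrite msupp_eq0.
by case/exists_max => a ha Ha; exists a; split.
Qed.

Lemma msupp_neq0 (p : {mpoly rat[n]}) a : a \in msupp p -> p != 0.
Proof. by apply: contraTneq => ->; rewrite msupp0. Qed.

End Lex.
Section Pow.
Variables (n m : nat).
Hypothesis hm : (0 < m)%N.
Local Notation P := {mpoly rat[n]}.
Local Notation M := 'X_{1..n}.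
Implicit Types (a b c d e : M) (f g h p s : P).

Lemma coef_sum f (w : M -> P) e a :
  (forall b, b \in msupp f -> (w b)@_e = (b == a)%:R) ->
  (\sum_(b <- msupp f) f@_b *: w b)@_e = f@_a.
Proof.
move=> H; transitivity ((\sum_(b <- msupp f) f@_b *: 'X_[b])@_a); last first.
  by rewrite -mpolyE.
rewrite !raddf_sum /=; apply: eq_big_seq => b hb.
by rewrite !mcoeffZ H // mcoeffX.
Qed.

Lemma supp_sum f (w : M -> P) d :
  d \in msupp (\sum_(b <- msupp f) f@_b *: w b) ->
  exists2 b, b \in msupp f & d \in msupp (w b).
Proof.
move/msupp_sum_le/flattenP => [s /mapP [b hb ->] hd].
exists b; first by move: hb; rewrite mem_filter.
exact: msuppZ_le hd.
Qed.

Lemma powmX a : powm m ('X_[a] : P) = 'X_[(a *+ m)%MM].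
Proof.
rewrite /powm comp_mpolyX mpolyXE_id; apply: eq_bigr => i _.
by rewrite tnth_mktuple mulmnE -exprM mulnC.
Qed.

Lemma powmE p : powm m p = \sum_(a <- msupp p) p@_a *: 'X_[(a *+ m)%MM].
Proof.
rewrite /powm comp_mpolyEX; apply: eq_bigr => a _; congr (_ *: _); exact: powmX.
Qed.

Lemma mulm_inj : injective (fun a : M => (a *+ m)%MM).
Proof.
move=> a b /mnmP H; apply/mnmP => i; move: (H i); rewrite !mulmnE.
by move/eqP; rewrite eqn_pmul2r // => /eqP.
Qed.

Lemma powm_coef p c : (powm m p)@_(c *+ m)%MM = p@_c.
Proof.
rewrite powmE; apply: coef_sum => b _; rewrite mcoeffX.
by rewrite (inj_eq mulm_inj).
Qed.

Lemma powm_supp p d : d \in msupp (powm m p) ->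
  exists2 c, c \in msupp p & d = (c *+ m)%MM.
Proof.
rewrite powmE => /supp_sum [b hb]; rewrite msuppX mem_seq1 => /eqP ->.
by exists b.
Qed.

Lemma lex_mulm a b : lex_lt (a *+ m)%MM (b *+ m)%MM = lex_lt a b.
Proof.
apply: lex_map => i; rewrite !mulmnE; [exact: eqn_pmul2r | exact: ltn_pmul2r].
Qed.

Lemma mdiv_mulm a b : mdiv (a *+ m)%MM (b *+ m)%MM = mdiv a b.
Proof.
apply/mdivP/mdivP => H i; move: (H i); rewrite !mulmnE leq_pmul2r //.
Qed.

Lemma powm_lm p a : is_lm p a -> is_lm (powm m p) (a *+ m)%MM.
Proof.
move=> [ha Ha]; split; first by rewrite mcoeff_msupp powm_coef -mcoeff_msupp.
move=> b /powm_supp [c hc ->] hne.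
rewrite lex_mulm; apply: Ha => //; apply: contraNneq hne => ->; by [].
Qed.

Definition qm (b : M) : M := [multinom (b i %/ m)%N | i < n].
Definition wr (a0 b : M) : P :=
  if [forall i, (b i %% m == a0 i %% m)%N] then 'X_[qm b] else 0.
Definition psi (a0 : M) (f : P) : P := \sum_(b <- msupp f) f@_b *: wr a0 b.

Lemma psiE a0 f k : (msize f <= k)%N ->
  psi a0 f = \sum_(b : 'X_{1..n < k}) f@_b *: wr a0 b.
Proof.
move=> le_pk; pose I : subFinType _ := 'X_{1..n < k}.
rewrite /psi (big_mksub I) ?msupp_uniq //=; first last.
  by move=> x /msize_mdeg_lt /leq_trans; apply.
by rewrite big_rmcond //= => j /memN_msupp_eq0 ->; rewrite scale0r.
Qed.

Lemma psi0 a0 : psi a0 0 = 0.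
Proof. by rewrite /psi msupp0 big_nil. Qed.

Lemma psiD a0 f g : psi a0 (f + g) = psi a0 f + psi a0 g.
Proof.
pose k := (msize f + msize g + msize (f + g))%N.
rewrite !(psiE a0 (k := k)); try (rewrite /k; lia).
rewrite -big_split /=; apply: eq_bigr => b _; by rewrite mcoeffD scalerDl.
Qed.

Lemma psiZ a0 (c : rat) f : psi a0 (c *: f) = c *: psi a0 f.
Proof.
pose k := (msize f + msize (c *: f))%N.
rewrite (psiE a0 (k := k)) /k; last exact: leq_addl.
rewrite (psiE a0 (f := f) (k := k)) /k; last exact: leq_addr.
rewrite scaler_sumr; apply: eq_bigr => b _; by rewrite mcoeffZ scalerA.
Qed.

Lemma psi_sum a0 (I : Type) (r : seq I) (F : I -> P) :
  psi a0 (\sum_(i <- r) F i) = \sum_(i <- r) psi a0 (F i).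
Proof.
elim: r => [|x r IH]; first by rewrite !big_nil psi0.
by rewrite !big_cons psiD IH.
Qed.

Lemma psiX a0 e : psi a0 'X_[e] = wr a0 e.
Proof. by rewrite /psi msuppX big_seq1 mcoeffX eqxx scale1r. Qed.

Lemma wrD a0 c d : wr a0 (c + d *+ m)%MM = wr a0 c * 'X_[d].
Proof.
rewrite /wr.
have -> : [forall i, ((c + d *+ m)%MM i %% m == a0 i %% m)%N] =
          [forall i, (c i %% m == a0 i %% m)%N].
  apply: eq_forallb => i; by rewrite mnmDE mulmnE addnC modnMDl.
case: ifP => _; last by rewrite mul0r.
rewrite -mpolyXD; congr 'X_[_]; apply/mnmP => i.
rewrite !mnmE.
by rewrite mulmnE addnC divnMDl // addnC.
Qed.

Lemma psiM a0 h s : psi a0 (h * powm m s) = psi a0 h * s.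
Proof.
have -> : h * powm m s = \sum_(c <- msupp h) \sum_(d <- msupp s)
      (h@_c * s@_d) *: 'X_[(c + d *+ m)%MM].
  rewrite {1}[h]mpolyE powmE mulr_suml; apply: eq_bigr => c _.
  rewrite mulr_sumr; apply: eq_bigr => d _.
  by rewrite -scalerAl -scalerAr scalerA -mpolyXD.
have -> : psi a0 h * s = \sum_(c <- msupp h) \sum_(d <- msupp s)
      (h@_c * s@_d) *: (wr a0 c * 'X_[d]).
  rewrite /psi mulr_suml; apply: eq_bigr => c _.
  rewrite {1}[s]mpolyE mulr_sumr; apply: eq_bigr => d _.
  by rewrite -scalerAl -scalerAr scalerA.
rewrite psi_sum; apply: eq_bigr => c _; rewrite psi_sum; apply: eq_bigr => d _.
by rewrite psiZ psiX wrD.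
Qed.

Lemma psi_ideal a0 (S : P -> Prop) f :
  ideal_gen (set_powm m S) f -> ideal_gen S (psi a0 f).
Proof.
case=> s [Hs ->]; elim: s Hs => [|x s IH] Hs.
  by exists [::]; split => //; rewrite big_nil psi0.
have [p Sp Ex] := Hs x (mem_head _ _).
have [s' [Hs' E']] : ideal_gen S (psi a0 (\sum_(x <- s) x.1 * x.2)).
  by apply: IH => y hy; apply: Hs; rewrite in_cons hy orbT.
exists ((psi a0 x.1, p) :: s'); split.
  by move=> y; rewrite in_cons => /orP[/eqP->//|]; apply: Hs'.
by rewrite !big_cons psiD Ex psiM E'.
Qed.

Lemma psi_lm f a0 : is_lm f a0 -> is_lm (psi a0 f) (qm a0).
Proof.
have decomp : forall b i, (b i = qm b i * m + b i %% m)%N.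
  by move=> b i; rewrite mnmE -divn_eq.
have qinj : forall b, [forall i, (b i %% m == a0 i %% m)%N] ->
    (qm b == qm a0) = (b == a0).
  move=> b /forallP Hb; apply/eqP/eqP => [E|->//]; apply/mnmP => i.
  by rewrite (decomp b i) (decomp a0 i) E (eqP (Hb i)).
move=> [ha Ha]; split.
  rewrite mcoeff_msupp /psi (coef_sum (a := a0)) -?mcoeff_msupp //.
  move=> b _; rewrite /wr; case: ifP => hb.
    by rewrite mcoeffX qinj.
  rewrite mcoeff0; case: eqP => // E; move: hb; rewrite E.
  by have -> : [forall i, (a0 i %% m == a0 i %% m)%N] by apply/forallP.
move=> d /supp_sum [b hb]; rewrite /wr; case: ifP => Hb; last by rewrite msupp0.
rewrite msuppX mem_seq1 => /eqP -> hne.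
have ba : b != a0 by rewrite -qinj.
have := Ha b hb ba; move/forallP: Hb => Hb.
have Ei : forall i, (b i = qm b i * m + a0 i %% m /\ a0 i = qm a0 i * m + a0 i %% m)%N.
  by move=> i; split; [rewrite -(eqP (Hb i)); exact: decomp | exact: decomp].
rewrite (@lex_map _ b a0 (qm b) (qm a0)) //.
  move=> i; case: (Ei i) => E1 E2; rewrite E1 {2}E2; by rewrite eqn_add2r eqn_pmul2r.
move=> i; case: (Ei i) => E1 E2; rewrite E1 {2}E2; by rewrite ltn_add2r ltn_pmul2r.
Qed.

Lemma mdiv_qm e a0 : mdiv e (qm a0) -> mdiv (e *+ m)%MM a0.
Proof.
move=> /mdivP H; apply/mdivP => i; rewrite mulmnE.
apply: leq_trans (leq_trunc_div (a0 i) m); move: (H i); rewrite mnmE.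
by rewrite leq_pmul2r.
Qed.

End Pow.
Section Ideals.
Variables (n : nat).
Local Notation P := {mpoly rat[n]}.
Local Notation M := 'X_{1..n}.

Lemma powm_ideal m (S : P -> Prop) p :
  ideal_gen S p -> ideal_gen (set_powm m S) (powm m p).
Proof.
case=> s [Hs ->]; exists (map (fun x => (powm m x.1, powm m x.2)) s); split.
  by move=> y /mapP [x hx ->] /=; exists x.2 => //; exact: Hs.
rewrite big_map /powm rmorph_sum; apply: eq_bigr => x _; by rewrite rmorphM.
Qed.

Lemma ideal_sub (S : P -> Prop) p q :
  ideal_gen S p -> ideal_gen S q -> ideal_gen S (p - q).
Proof.
case=> s [Hs ->] [t [Ht ->]].
exists (s ++ map (fun x => (- x.1, x.2)) t); split.
  move=> y; rewrite mem_cat => /orP[/Hs//|/mapP [x hx ->] /=]; exact: Ht.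
rewrite big_cat big_map /= -sumrN; congr (_ + _); apply: eq_bigr => x _.
by rewrite mulNr.
Qed.

Lemma no_small (I : P -> Prop) G g a h e :
  is_reduced_groebner I G -> g \in G -> is_lm g a -> I h -> h != 0 ->
  is_lm h e -> e \in msupp g -> e != a -> False.
Proof.
move=> [[_ GB] [_ Red]] gG lmg Ih h0 lmh eg ea.
case: (GB h Ih h0 e lmh) => k kG [t lmk dv].
case: (eqVneq g k) => [gk|gk].
  subst k; have ta := lm_uniq lmk lmg; subst t.
  by move: (mdiv_nlex dv); rewrite (lmg.2 e eg ea).
by move: (Red g k gG kG gk t lmk e eg); rewrite dv.
Qed.

Lemma rgb_sub (I : P -> Prop) G G' :
  (forall p q, I p -> I q -> I (p - q)) ->
  is_reduced_groebner I G -> is_reduced_groebner I G' -> {subset G' <= G}.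
Proof.
move=> Isub RG RG' g' g'G'.
case: (RG'.2.1 g' g'G') => a' lm' c1'.
have Ig' : I g' := RG'.1.1 g' g'G'.
have g'0 : g' != 0 := msupp_neq0 lm'.1.
case: (RG.1.2 g' Ig' g'0 a' lm') => g gG [b lmg dv1].
have Ig : I g := RG.1.1 g gG.
have g0 : g != 0 := msupp_neq0 lmg.1.
case: (RG'.1.2 g Ig g0 b lmg) => g'' g''G' [c lm'' dv2].
have eq1 : g'' = g'.
  apply/eqP; apply: contraT => ne.
  have ne' : g' != g'' by rewrite eq_sym.
  have := RG'.2.2 g' g'' g'G' g''G' ne' c lm'' a' lm'.1.
  by rewrite (mdiv_trans dv2 dv1).
subst g''; have ca := lm_uniq lm'' lm'; subst c.
have ba := mdiv_anti dv1 dv2; subst b.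
case: (RG.2.1 g gG) => b0 lmg0 c1; have bb := lm_uniq lmg0 lmg; subst b0.
case: (eqVneq g g') => [<-//|ne].
have Ih : I (g - g') := Isub _ _ Ig Ig'.
have h0 : g - g' != 0 by rewrite subr_eq0.
case: (exists_lm h0) => e lmh.
have ea : e != a'.
  apply: contraTneq lmh.1 => ->; rewrite mcoeff_msupp mcoeffB c1 c1' subrr.
  by rewrite eqxx.
have := msuppB_le lmh.1; rewrite mem_cat => /orP[eg|eg'].
- by case: (no_small RG gG lmg Ih h0 lmh eg ea).
- by case: (no_small RG' g'G' lm' Ih h0 lmh eg' ea).
Qed.

End Ideals.

Theorem mainTheorem4 (n : nat) (S : {mpoly rat[n]} -> Prop) (m : nat)
    (hm : (1 <= m)%N) (G : seq {mpoly rat[n]}) :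
  is_reduced_groebner (ideal_gen S) G ->
  is_reduced_groebner (ideal_gen (set_powm m S)) (map (powm m) G) /\
  (forall G', is_reduced_groebner (ideal_gen (set_powm m S)) G' ->
     G' =i map (powm m) G).
Proof.
move=> RG.
have [[IG GB] [Mon Red]] := RG.
have RGm : is_reduced_groebner (ideal_gen (set_powm m S)) (map (powm m) G).
  split; [split|split].
  - move=> g /mapP [g0 g0G ->]; apply: powm_ideal; exact: IG.
  - move=> f If f0 a lmf.
    have lmq := psi_lm hm lmf.
    have Ipsi := psi_ideal hm a If.
    case: (GB _ Ipsi (msupp_neq0 lmq.1) _ lmq) => g0 g0G [e lme dv].
    exists (powm m g0); first exact: map_f.
    exists (e *+ m)%MM; [exact: powm_lm | exact: mdiv_qm].
  - move=> g /mapP [g0 g0G ->]; case: (Mon g0 g0G) => a lma c1.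
    by exists (a *+ m)%MM; [exact: powm_lm | rewrite powm_coef].
  - move=> g g' /mapP [g0 g0G ->] /mapP [g0' g0'G ->] ne a lma b hb.
    have ne0 : g0 != g0' by apply: contraNneq ne => ->.
    case: (Mon g0' g0'G) => e lme _.
    have -> := lm_uniq lma (powm_lm hm lme).
    case: (powm_supp hb) => c hc ->; rewrite mdiv_mulm //.
    exact: Red g0 g0' g0G g0'G ne0 e lme c hc.
split => // G' RG' g; apply/idP/idP.
- move=> hg; apply: (rgb_sub _ RGm RG' hg) => p q; exact: ideal_sub.
- move=> hg; apply: (rgb_sub _ RG' RGm hg) => p q; exact: ideal_sub.
Qed.
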